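(* Let $n\ge 2$ and let $\mathcal{P}^c(Q_{4n})$ be the conjugacy super power graph of the generalized quaternion group $Q_{4n}$. (i) If $n$ is even, then $-(n+1)\sqrt2$ is an eigenvalue of the Sombor matrix of $\mathcal{P}^c(Q_{4n})$ with multiplicity at least $2n-2$. (ii) If $n$ is odd, then $-(2n+1)\sqrt2$ is an eigenvalue of the Sombor matrix of $\mathcal{P}^c(Q_{4n})$ with multiplicity at least $2n-1$.
   Context: For a finite simple graph $\Gamma$ with vertices $u_1,\dots,u_N$, the Sombor matrix $S(\Gamma)$ has $(i,j)$ entry $\sqrt{\deg(u_i)^2+\deg(u_j)^2}$ if $u_i,u_j$ are adjacent and $0$ otherwise. $Q_{4n}=\langle a,b: a^{2n}=e,\ a^n=b^2,\ ba=a^{-1}b\rangle$. The power graph $\mathcal{P}(G)$ has vertex set $G$, distinct $x,y$ adjacent iff $x\in\langle y\rangle$ or $y\in\langle x\rangle$. The conjugacy super power graph $\mathcal{P}^c(G)$ has vertex set $G$, and distinct $g,h$ are adjacent iff $g,h$ are conjugate in $G$ or there exist $g'$ conjugate to $g$ and $h'$ conjugate to $h$ that are adjacent in $\mathcal{P}(G)$. *)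

(* Defs.v *)
From mathcomp Require Import all_boot all_order all_algebra all_fingroup.
Set Implicit Arguments. Unset Strict Implicit. Unset Printing Implicit Defensive.
Import GRing.Theory Num.Theory.
Local Open Scope ring_scope.

Definition power_adj (gT : finGroupType) (x y : gT) : bool :=
  (x != y) && ((x \in <[y]>%g) || (y \in <[x]>%g)).

Definition cspg_adj (gT : finGroupType) (G : {set gT}) (g h : gT) : bool :=
  (g != h) &&
  ((g \in (h ^: G)%g) ||
   [exists g' in (g ^: G)%g, exists h' in (h ^: G)%g, power_adj g' h']).

Definition gdeg (T : finType) (V : {set T}) (adj : rel T) (x : T) : nat :=
  #|[set y in V | adj x y]|.

Definition sombor_matrix (R : rcfType) (T : finType) (V : {set T}) (adj : rel T)
  : 'M[R]_#|V| :=
  \matrix_(i < #|V|, j < #|V|)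
    let u := enum_val i in let v := enum_val j in
    if adj u v then
      Num.sqrt (((gdeg V adj u)%:R : R) ^+ 2 + ((gdeg V adj v)%:R : R) ^+ 2)
    else 0.

(* Main.v *)
Require Import Defs.
From mathcomp Require Import all_boot all_order all_algebra all_fingroup.
From mathcomp Require Import all_solvable zify.
Set Implicit Arguments. Unset Strict Implicit. Unset Printing Implicit Defensive.
Import GRing.Theory Num.Theory.
Local Open Scope ring_scope.

Lemma det_twin (R : comNzRingType) (N : nat) (M : 'M[R]_N) (T : {set 'I_N})
  (p : 'I_N -> 'I_N) (q : R) :
  (forall i, i \in T -> p i \notin T) ->
  (forall i j, i \in T -> M i j - M (p i) j = q * ((i == j)%:R - (p i == j)%:R)) ->
  exists r, \det M = q ^+ #|T| * r.
Proof.
move=> pT HM.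
pose Nn := \matrix_(i, j) if i \in T then ((i == j)%:R - (p i == j)%:R) else M i j.
pose d := \row_(i < N) (if i \in T then q else 1).
pose K := diag_mx d *m Nn.
pose F := (1%:M : 'M[R]_N) + \matrix_(i, l) (if (i \in T) && (l == p i) then 1 else 0).
have KE i j : K i j = if i \in T then q * ((i == j)%:R - (p i == j)%:R) else M i j.
  rewrite /K mul_diag_mx !mxE; case: ifP => _; first by [].
  by rewrite mul1r.
have FK i j : ((\matrix_(i, l) (if (i \in T) && (l == p i) then 1 else 0)) *m K) i j
     = if i \in T then K (p i) j else 0.
  rewrite mxE (bigD1 (p i)) //= big1 ?addr0; last first.
    by move=> l /negbTE Hl; rewrite mxE Hl andbF mul0r.
  by rewrite mxE eqxx andbT; case: (i \in T); rewrite ?mul1r ?mul0r.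
have MFK : M = F *m K.
  apply/matrixP => i j; rewrite /F mulmxDl mul1mx mxE FK.
  case iT: (i \in T); last by rewrite addr0 KE iT.
  rewrite !KE iT (negbTE (pT i iT)).
  by rewrite -(HM i j iT) subrK.
exists (\det F * \det Nn).
rewrite MFK det_mulmx /K det_mulmx det_diag.
have -> : \prod_i d 0 i = q ^+ #|T|.
  rewrite -prodr_const (bigID (fun i => i \in T)) /=.
  rewrite [X in _ * X]big1 ?mulr1; last by move=> i /negbTE Hi; rewrite mxE Hi.
  by apply: eq_bigr => i Hi; rewrite mxE Hi.
by rewrite mulrCA.
Qed.

Lemma twin_mup (R : rcfType) (T : finType) (V : {set T}) (adj : rel T)
  (X : {set T}) (pv : T -> T) (d : nat) :
  X \subset V ->
  (forall u, u \in X -> [/\ pv u \in V, pv u \notin X, ~~ adj u u,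
      ~~ adj (pv u) (pv u) &
      [/\ adj u (pv u), adj (pv u) u, gdeg V adj u = d, gdeg V adj (pv u) = d &
      forall w, w \in V -> w != u -> w != pv u -> adj u w = adj (pv u) w]]) ->
  (#|X| <= mup (- (d%:R * Num.sqrt 2) : R) (char_poly (sombor_matrix R V adj)))%N.
Proof.
move=> XV H.
have [->|[u0 Xu0]] := set_0Vmem X; first by rewrite cards0.
have Vu0 : u0 \in V by apply: (subsetP XV).
pose ev := @enum_val T V.
pose T' := [set i | ev i \in X].
pose p i := enum_rank_in Vu0 (pv (ev i)).
have evp i : i \in T' -> ev (p i) = pv (ev i).
  by rewrite inE => /H [Hv _ _ _ _]; rewrite /p /ev enum_rankK_in.
have cardT : (#|X| <= #|T'|)%N.
  apply: leq_trans (leq_imset_card ev T'); apply: subset_leq_card.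
  apply/subsetP => x Xx; apply/imsetP.
  have Vx : x \in V by exact: (subsetP XV).
  exists (enum_rank_in Vu0 x); last by rewrite /ev enum_rankK_in.
  by rewrite inE /ev enum_rankK_in.
set c := Num.sqrt ((d%:R : R) ^+ 2 + (d%:R : R) ^+ 2).
have cE : c = d%:R * Num.sqrt 2.
  rewrite /c (_ : _ + _ = ((d%:R : R) ^+ 2) * 2); last by rewrite mulr_natr mulr2n.
  by rewrite sqrtrM ?sqr_ge0 // sqrtr_sqr ger0_norm.
have [r Hr] : exists r, char_poly (sombor_matrix R V adj) = ('X + c%:P) ^+ #|T'| * r.
  apply: (@det_twin _ _ _ T' p).
    move=> i Ti; rewrite inE evp //; move: Ti; rewrite inE => /H.
    by case.
  move=> i j Ti; have := Ti; rewrite inE => /H [Vp nXp naii napp [aip api di dp eqa]].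
  have Xi : ev i \in X by move: Ti; rewrite inE.
  have nip : ev i != pv (ev i) by apply: contraNneq nXp => <-.
  have pij : (p i == i) = false.
    by apply/negbTE; apply: contra nip => /eqP Hp; rewrite -evp // Hp.
  have evpi := evp i Ti; rewrite /ev in evpi nip Xi naii napp aip api di dp eqa; rewrite !mxE /= evpi.
  case: (eqVneq i j) => [<-|nij].
    rewrite pij (negbTE naii) api dp di -/c.
    rewrite mulr1n mulr0n polyC0 /= subr0 sub0r opprK subr0 mulr1.
    by [].
  case: (eqVneq (p i) j) => [<-|npj].
    rewrite evpi aip (negbTE napp) di dp -/c mulr1n mulr0n polyC0 /= subr0.
    by rewrite !sub0r mulrN1 opprD addrC.
  have nj : enum_val j != enum_val i by apply: contraNneq nij => /enum_val_inj ->.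
  have npj' : enum_val j != pv (enum_val i).
    by rewrite -evpi; apply: contraNneq npj => /enum_val_inj ->.
  rewrite -(eqa _ (enum_valP j) nj npj') di dp subr0 mulr0 mulr0n.
  by rewrite subrr.
have Xn : ('X + c%:P) ^+ #|T'| %| char_poly (sombor_matrix R V adj).
  by rewrite Hr dvdp_mulIl.
rewrite -cE; apply: leq_trans cardT _.
rewrite mup_geq; last by apply: monic_neq0; apply: char_poly_monic.
by rewrite polyCN opprK.
Qed.

Open Scope group_scope.

Section Q.
Context (gT : finGroupType) (G : {group gT}) (a b : gT) (n : nat).
Context (n2 : (2 <= n)%N) (HG : G :=: <<[set a; b]>>) (Ha2n : a ^+ (2 * n) = 1)
  (Han : a ^+ n = b ^+ 2) (Hba : b * a = a^-1 * b) (cG : #|G| = (4 * n)%N).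

Lemma Qa : a \in G.
Proof. by rewrite HG; apply: mem_gen; rewrite !inE eqxx. Qed.
Lemma Qb : b \in G.
Proof. by rewrite HG; apply: mem_gen; rewrite !inE eqxx orbT. Qed.

Lemma Qab : a ^ b = a^-1.
Proof.
have H : (a^-1) ^ b = a by rewrite conjgE -Hba mulKg.
by apply: invg_inj; rewrite invgK -conjVg.
Qed.

Lemma QAb x : x \in <[a]> -> x ^ b = x^-1.
Proof. by case/cycleP => k ->; rewrite conjXg Qab expgVn. Qed.

Lemma QbA x : x \in <[a]> -> b * x = x^-1 * b.
Proof.
move=> Ax; have H := QAb (groupVr Ax); rewrite invgK conjgE in H.
by rewrite -{1}H mulKVg.
Qed.


Lemma QbV x : x \in <[a]> -> b^-1 * x = x^-1 * b^-1.
Proof.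
move=> Ax; apply: (mulgI b); rewrite mulKVg mulgA QbA ?groupV // invgK.
by rewrite mulgK.
Qed.

Notation A := <[a]>.

Lemma QAG : A \subset G.
Proof. by rewrite cycle_subG Qa. Qed.

Lemma QcommA x y : x \in A -> y \in A -> x * y = y * x.
Proof.
by move=> Ax Ay; have /centsP := cycle_abelian a; move/(_ x Ax y Ay).
Qed.

Lemma QNA : G \subset 'N(A).
Proof.
rewrite HG gen_subG; apply/subsetP => x; rewrite !inE => /orP[]/eqP ->.
  by rewrite -cycleJ conjgE mulKg.
by rewrite -cycleJ Qab cycleV.
Qed.

Lemma QanC x : x \in G -> x * a ^+ n = a ^+ n * x.
Proof.
move=> Gx; have : G \subset 'C[a ^+ n].
  rewrite HG gen_subG; apply/subsetP => y; rewrite in_set2 => /orP[]/eqP ->;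
    apply/cent1P.
    by apply: commuteX; apply: commute_refl.
  by rewrite /commute Han; apply: commuteX; apply: commute_refl.
by move/subsetP/(_ x Gx)/cent1P.
Qed.

Lemma QanJ x : x \in G -> (a ^+ n) ^ x = a ^+ n.
Proof. by move=> Gx; rewrite conjgE -QanC ?mulKg. Qed.

Lemma Qan2 : a ^+ n * a ^+ n = 1.
Proof. by rewrite -expgD addnn -mul2n. Qed.


Lemma Qbb : b * b = a ^+ n.
Proof. by rewrite Han expgS expg1. Qed.

Lemma QH : G \subset A :|: A :* b.
Proof.
have gH : group_set (A :|: A :* b).
  apply/group_setP; split; first by rewrite inE group1.
  move=> x y; rewrite !inE !mem_rcoset => /orP[Hx|Hx] /orP[Hy|Hy].
  - by rewrite groupM.
  - by apply/orP; right; rewrite -mulgA groupM.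
  - have -> : x * y * b^-1 = x * b^-1 * y^-1.
      by rewrite -!mulgA QbV ?groupV // invgK.
    by apply/orP; right; rewrite groupM ?groupV.
  - have [z Az ->] : exists2 z, z \in A & y = z * b.
      by exists (y * b^-1); rewrite ?mulgKV.
    have [x' Ax' ->] : exists2 x', x' \in A & x = x' * b.
      by exists (x * b^-1); rewrite ?mulgKV.
    have -> : x' * b * (z * b) = x' * z^-1 * (b * b).
      by rewrite !mulgA -(mulgA x' b z) QbA // !mulgA.
    by apply/orP; left; rewrite Qbb !groupM ?groupV ?mem_cycle.
have -> : A :|: A :* b = Group gH by [].
rewrite HG gen_subG; apply/subsetP => y; rewrite in_set2 => /orP[]/eqP ->;
  rewrite inE ?mem_rcoset ?cycle_id //.
by rewrite mulgV group1 orbT.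
Qed.

Lemma QoA : #[a] = (2 * n)%N.
Proof.
have h1 : (#[a] <= 2 * n)%N.
  by apply: dvdn_leq; [lia | rewrite order_dvdn Ha2n].
have h2 : (#|G| <= #|A| + #|A|)%N.
  apply: leq_trans (subset_leq_card QH) _.
  by rewrite -{2}(card_rcoset A b) cardsU leq_subr.
have e : #[a] = #|A| by [].
rewrite cG in h2; lia.
Qed.

Lemma QAdisj x : x \in A -> x * b \notin A.
Proof.
move=> Ax; apply/negP => Axb.
have h : #|A :&: A :* b| = 0%N.
  have := cardsUI A (A :* b); rewrite card_rcoset /=.
  have e : #|A| = (2 * n)%N by rewrite -QoA.
  rewrite e; have := subset_leq_card QH; rewrite cG.
  set U := #|_ :|: _|; set I := #|_ :&: _|; lia.
have : x * b \in A :&: A :* b by rewrite inE Axb mem_rcoset mulgK.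
by move/card0_eq: h => ->.
Qed.

Lemma QGsplit x : x \in G -> x \notin A -> x * b^-1 \in A.
Proof.
by move=> /(subsetP QH); rewrite inE mem_rcoset => /orP[->|].
Qed.

Lemma QxbG x : x \in A -> x * b \in G.
Proof. by move=> Ax; rewrite groupM ?Qb // (subsetP QAG). Qed.

Lemma Qsq x : x \in A -> (x * b) ^+ 2 = a ^+ n.
Proof.
move=> Ax; rewrite expgS expg1 !mulgA -(mulgA x b x) QbA //.
by rewrite !mulgA mulgV mul1g Qbb.
Qed.

Lemma Qsq2 x : x \in A -> (x * b) * (x * b) = a ^+ n.
Proof. by move=> Ax; rewrite -(Qsq Ax) expgS expg1. Qed.

Lemma Qcyc x : x \in A ->
  <[x * b]> \subset [set 1; a ^+ n; x * b; a ^+ n * (x * b)].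
Proof.
move=> Ax; apply/subsetP => y /cycleP [k ->]; elim: k => [|k IH].
  by rewrite expg0 !inE eqxx.
rewrite expgSr; move: IH; rewrite !inE; case/orP => [/orP[/orP[]|]|] /eqP ->.
- by rewrite mul1g eqxx !orbT.
- by rewrite eqxx !orbT.
- by rewrite Qsq2 // eqxx orbT.
- by rewrite -mulgA Qsq2 // Qan2 eqxx.
Qed.


Notation A2 := <[a ^+ 2]>.

Lemma QA2A : A2 \subset A.
Proof. exact: cycleX. Qed.

Lemma QA2ev k : ~~ odd k -> a ^+ k \in A2.
Proof.
move=> ek; rewrite -[k](odd_double_half) (negbTE ek) add0n -mul2n expgM.
exact: mem_cycle.
Qed.

Lemma QcA2 : #|A2| = n.
Proof.
have -> : #|A2| = #[a ^+ 2] by [].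
rewrite orderXdiv QoA ?mulKn // dvdn_mulr //.
Qed.

Lemma QanA : a ^+ n \in A.
Proof. exact: mem_cycle. Qed.

Lemma Qan1 : a ^+ n != 1.
Proof.
apply/negP => /eqP h; have : (#[a] %| n)%N by rewrite order_dvdn h.
rewrite QoA => /dvdn_leq; lia.
Qed.

Lemma QanotA2 : a \notin A2.
Proof.
apply/negP => /cycleP [m]; rewrite -expgM => /eqP.
rewrite -{1}(expg1 a) eq_expg_mod_order QoA => /eqP.
rewrite -muln_modr //= modn_small; lia.
Qed.

Lemma QccA2 c : c \in A -> c * c \in A2.
Proof.
by case/cycleP => k ->; rewrite -expgD addnn -mul2n expgM mem_cycle.
Qed.

Lemma QoddA2 z : odd n -> z \in A -> (z \in A2) || (z * a ^+ n \in A2).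
Proof.
move=> on /cycleP [k ->]; case ek: (odd k); last by rewrite QA2ev ?ek.
by apply/orP; right; rewrite -expgD; apply: QA2ev; rewrite oddD ek on.
Qed.

Lemma QevA2 : ~~ odd n -> a ^+ n \in A2.
Proof. exact: QA2ev. Qed.

Lemma QinA x : x \in A2 -> x \in A.
Proof. exact: (subsetP QA2A). Qed.

Lemma QCJ x y : x \in A -> y \in A -> y^-1 * x \in A2 -> x * b \in (y * b) ^: G.
Proof.
move=> Ax Ay /cycleP [m Hm].
apply/imsetP; exists (a ^+ m)^-1; first by rewrite groupV groupX ?Qa.
have Am : a ^+ m \in A by apply: mem_cycle.
rewrite conjgE invgK -(mulgA y b) QbA ?groupV // invgK.
rewrite !mulgA (QcommA Am Ay) -(mulgA y) -expgD addnn -mul2n expgM -Hm.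
by rewrite mulKVg.
Qed.


Lemma QJA x y : x \in A -> y \in A -> x ^ y = x.
Proof. by move=> Ax Ay; rewrite conjgE (QcommA Ax Ay) mulKg. Qed.

Lemma QSpt (K : {group gT}) c y : A2 \subset K -> K \subset A -> c \in A ->
  y \in K :* (c * b) -> (y ^ a \in K :* (c * b)) && (y ^ b \in K :* (c * b)).
Proof.
move=> A2K KA Ac; rewrite mem_rcoset => Ky.
have Aa : a \in A by apply: cycle_id.
have [s Ks ->] : exists2 s, s \in K & y = s * (c * b).
  by exists (y * (c * b)^-1); rewrite ?mulgKV.
have As : s \in A by apply: (subsetP KA).
have Asc : s * c \in A by rewrite groupM.
rewrite !mem_rcoset mulgA !conjMg (QJA As Aa) (QJA Ac Aa) (QAb As) (QAb Ac) (conjgE b b) mulKg.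
have AP : a^-1 * a^-1 \in A by rewrite groupM ?groupV.
have KP : a^-1 * a^-1 \in K by rewrite -invMg groupV (subsetP A2K) // QccA2.
have e : c * (a^-1 * a^-1) = (a^-1 * a^-1) * c by apply: QcommA.
apply/andP; split.
  have -> : b ^ a = a^-1 * a^-1 * b by rewrite conjgE -mulgA Hba.
  rewrite (mulgA (s * c)) -(mulgA s c) e mulgA -(mulgA _ c b) mulgK.
  by rewrite groupM.
rewrite invMg !mulgA mulgK -mulgA -invMg groupM ?groupV //.
by rewrite (subsetP A2K) // QccA2.
Qed.

Lemma QSnorm (K : {group gT}) c : A2 \subset K -> K \subset A -> c \in A ->
  G \subset 'N(K :* (c * b)).
Proof.
move=> A2K KA Ac; rewrite HG gen_subG; apply/subsetP => g.
rewrite in_set2 => /orP[]/eqP ->; rewrite inE; apply/subsetP => z;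
  rewrite mem_conjg => Hz.
  by rewrite -(conjgKV a z); case/andP: (QSpt A2K KA Ac Hz).
by rewrite -(conjgKV b z); case/andP: (QSpt A2K KA Ac Hz).
Qed.

Lemma QxbA x : x \in G -> x \notin A -> exists2 y, y \in A & x = y * b.
Proof. by move=> Gx nAx; exists (x * b^-1); rewrite ?QGsplit ?mulgKV. Qed.

Lemma QADJ (S : {set gT}) :
  {subset S <= G} ->
  (forall x, x \in S -> x \notin A) ->
  G \subset 'N(S) ->
  (forall x, x \in S -> a ^+ n * x \in S) ->
  (forall u w, u \in S -> w \in S -> u != w -> cspg_adj G u w) ->
  forall u w, u \in S -> w \in G ->
  cspg_adj G u w = (w != u) && (w \in [set 1; a ^+ n] :|: S).
Proof.
move=> SG SnA NS San Spos u w Su Gw.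
have Gu := SG u Su.
have A1 : 1 \in A := group1 _.
have NJ x g : g \in G -> (x ^ g \in [set 1; a ^+ n] :|: S) = (x \in [set 1; a ^+ n] :|: S).
  move=> Gg; rewrite !inE conjg_eq1 (memJ_norm _ (subsetP NS g Gg)).
  by rewrite -{1}(QanJ Gg) (inj_eq (@conjg_inj _ g)).
case Nw: (w \in [set 1; a ^+ n] :|: S); last first.
  rewrite andbF; apply/negP; rewrite /cspg_adj.
  case/andP => _ /orP [/imsetP [g Gg Eu] | ].
    by move: Nw; rewrite -(NJ w g Gg) -Eu inE Su orbT.
  case/existsP => g' /andP [/imsetP [g1 Gg1 Eg1]] /existsP [h' /andP [/imsetP [g2 Gg2 Eh] pa]].
  have Sg' : g' \in S by rewrite Eg1 (memJ_norm _ (subsetP NS g1 Gg1)).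
  have Nh' : (h' \in [set 1; a ^+ n] :|: S) = false by rewrite Eh NJ.
  have Gh' : h' \in G by rewrite Eh groupJ.
  have [x Ax Eg'] := QxbA (SG _ Sg') (SnA _ Sg').
  case/andP: pa => _ /orP [gh | hg].
    case Ah': (h' \in A).
      have : <[h']> \subset A by rewrite cycle_subG.
      by move/subsetP/(_ _ gh); rewrite (negbTE (SnA _ Sg')).
    have [y Ay Eh'] := QxbA Gh' (negbT Ah').
    move: gh; rewrite Eh' => /(subsetP (Qcyc Ay)); rewrite -Eh' !inE.
    case/orP => [/orP[/orP[]|]|] /eqP Eg.
    - by move: (SnA _ Sg'); rewrite Eg A1.
    - by move: (SnA _ Sg'); rewrite Eg QanA.
    - by move: Nh'; rewrite -Eg !inE Sg' !orbT.
    - have : h' = a ^+ n * g' by rewrite Eg mulgA Qan2 mul1g.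
      by move: Nh' => /[swap] ->; rewrite !inE San ?orbT.
  move: hg; rewrite Eg' => /(subsetP (Qcyc Ax)); rewrite -Eg' !inE.
  case/orP => [/orP[/orP[]|]|] /eqP Eh''.
  - by move: Nh'; rewrite Eh'' !inE eqxx.
  - by move: Nh'; rewrite Eh'' !inE eqxx orbT.
  - by move: Nh'; rewrite Eh'' !inE Sg' !orbT.
  - by move: Nh'; rewrite Eh'' !inE San ?orbT.
rewrite andbT; case: (eqVneq w u) => [->|nwu].
  by rewrite /cspg_adj eqxx.
move: Nw; rewrite !inE => /orP[/orP[]|] /eqP Ew.
- have nu1 : u != 1 by apply: contraNneq (SnA _ Su) => ->.
  apply/andP; split; first by rewrite eq_sym.
  apply/orP; right; apply/existsP; exists u; rewrite class_refl /=.
  apply/existsP; exists w; rewrite class_refl /power_adj eq_sym nwu Ew /=.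
  by rewrite group1 orbT.
- have nun : u != a ^+ n by apply: contraNneq (SnA _ Su) => ->; rewrite QanA.
  have [x Ax Eu] := QxbA Gu (SnA _ Su).
  apply/andP; split; first by rewrite eq_sym.
  apply/orP; right; apply/existsP; exists u; rewrite class_refl /=.
  apply/existsP; exists w; rewrite class_refl /power_adj eq_sym nwu Ew /=.
  by rewrite Eu -(Qsq Ax) mem_cycle orbT.
- by move/eqP: Ew => Sw; apply: Spos => //; rewrite eq_sym.
Qed.

Lemma QSmem (K : {group gT}) c x : K \subset A -> c \in A ->
  x \in K :* (c * b) -> exists2 y, y \in A & x = y * b.
Proof.
move=> KA Ac; rewrite mem_rcoset => Kx.
exists (x * (c * b)^-1 * c); first by rewrite groupM // (subsetP KA).
by rewrite -mulgA mulgKV.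
Qed.

Lemma QSG (K : {group gT}) c : K \subset A -> c \in A -> {subset K :* (c * b) <= G}.
Proof. by move=> KA Ac x /(QSmem KA Ac) [y Ay ->]; apply: QxbG. Qed.

Lemma QSnA (K : {group gT}) c : K \subset A -> c \in A ->
  forall x, x \in K :* (c * b) -> x \notin A.
Proof. by move=> KA Ac x /(QSmem KA Ac) [y Ay ->]; apply: QAdisj. Qed.

Lemma QSan (K : {group gT}) c : a ^+ n \in K ->
  forall x, x \in K :* (c * b) -> a ^+ n * x \in K :* (c * b).
Proof. by move=> Kan x; rewrite !mem_rcoset -mulgA; apply: groupM. Qed.

Lemma QJb u w : u \in G -> w \in G -> u \notin A -> w \notin A ->
  (w * b^-1)^-1 * (u * b^-1) \in A2 -> u \in w ^: G.
Proof.
move=> Gu Gw nAu nAw H.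
have := QCJ (QGsplit Gu nAu) (QGsplit Gw nAw) H.
by rewrite !mulgKV.
Qed.

Lemma QSpos_even (c : gT) : c \in A -> forall u w, u \in A2 :* (c * b) ->
  w \in A2 :* (c * b) -> u != w -> cspg_adj G u w.
Proof.
move=> Ac u w Su Sw nuw; apply/andP; split => //; apply/orP; left.
have A2A := QA2A.
apply: QJb; rewrite ?(QSG A2A Ac) ?(QSnA A2A Ac) //.
rewrite !mem_rcoset invMg !mulgA in Su Sw.
have Ax := QinA Su; have Ay := QinA Sw.
have -> : w * b^-1 = w * b^-1 * c^-1 * c by rewrite mulgKV.
have -> : u * b^-1 = u * b^-1 * c^-1 * c by rewrite mulgKV.
set X := w * b^-1 * c^-1 in Sw Ay *; set Y := u * b^-1 * c^-1 in Su Ax *.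
have AXY : X^-1 * Y \in A by rewrite groupM ?groupV.
rewrite invMg -mulgA (mulgA X^-1) -(QcommA Ac AXY) mulKg.
by rewrite groupM ?groupV.
Qed.

Lemma QSpos_odd : odd n -> forall u w, u \in A :* (1 * b) ->
  w \in A :* (1 * b) -> u != w -> cspg_adj G u w.
Proof.
move=> on u w Su Sw nuw; apply/andP; split => //.
have A1 : (1 : gT) \in A := group1 _.
have AA : A \subset A := subxx _.
have Gu := QSG AA A1 Su; have Gw := QSG AA A1 Sw.
have nAu := QSnA AA A1 Su; have nAw := QSnA AA A1 Sw.
have [x Ax Eu] := QxbA Gu nAu; have [y Ay Ew] := QxbA Gw nAw.
have Ayx : y^-1 * x \in A by rewrite groupM ?groupV.
case/orP: (QoddA2 on Ayx) => H.
  by apply/orP; left; rewrite Eu Ew; apply: QCJ.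
apply/orP; right; apply/existsP; exists u; rewrite class_refl /=.
apply/existsP; exists (a ^+ n * u); apply/andP; split.
  have H' : y^-1 * (x * a ^+ n) \in A2 by rewrite mulgA.
  have := QCJ (groupM Ax QanA) Ay H'.
  by rewrite (QcommA Ax QanA) -mulgA Eu Ew.
rewrite /power_adj; apply/andP; split.
  apply: contra Qan1 => /eqP E; apply/eqP; apply: (mulIg u); by rewrite mul1g -E.
apply/orP; right.
have -> : a ^+ n * u = u ^+ 3.
  by rewrite Eu -(Qsq Ax) -expgSr.
exact: mem_cycle.
Qed.

Lemma QTW (S : {set gT}) :
  {subset S <= G} ->
  (forall x, x \in S -> x \notin A) ->
  G \subset 'N(S) ->
  (forall x, x \in S -> a ^+ n * x \in S) ->
  (forall u w, u \in S -> w \in S -> u != w -> cspg_adj G u w) ->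
  forall u v, u \in S -> v \in S -> u != v ->
  [/\ cspg_adj G u v, cspg_adj G v u, gdeg G (cspg_adj G) u = #|S|.+1,
      gdeg G (cspg_adj G) v = #|S|.+1 &
      forall w, w \in G -> w != u -> w != v -> cspg_adj G u w = cspg_adj G v w].
Proof.
move=> SG SnA NS San Spos u v Su Sv nuv.
have E := QADJ SG SnA NS San Spos.
have cN : #|[set 1; a ^+ n] :|: S| = #|S|.+2.
  rewrite cardsU cards2 eq_sym Qan1.
  have -> : [set 1; a ^+ n] :&: S = set0.
    apply/setP => x; rewrite !inE; apply/negP => /andP [/orP[]/eqP -> Sx].
      by move: (SnA _ Sx); rewrite group1.
    by move: (SnA _ Sx); rewrite QanA.
  by rewrite cards0 subn0.
have deg x : x \in S -> gdeg G (cspg_adj G) x = #|S|.+1.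
  move=> Sx; rewrite /gdeg.
  have -> : [set y in G | cspg_adj G x y] = ([set 1; a ^+ n] :|: S) :\ x.
    apply/setP => y; rewrite !inE; case Gy: (y \in G).
      by rewrite /= (E x y Sx Gy) !inE.
    rewrite /= andbC; apply/esym/negbTE; rewrite negb_and; apply/orP; left.
    apply/negP => /orP [/orP[]/eqP Ey|Sy]; move: Gy.
    - by rewrite Ey group1.
    - by rewrite Ey groupX ?Qa.
    - by rewrite (SG _ Sy).
  have := cardsD1 x ([set 1; a ^+ n] :|: S).
  by rewrite cN !inE Sx orbT add1n => [[]].
split.
- by rewrite (E u v Su (SG _ Sv)) eq_sym nuv !inE Sv orbT.
- by rewrite (E v u Sv (SG _ Su)) nuv !inE Su orbT.
- exact: deg.
- exact: deg.
move=> w Gw nwu nwv.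
by rewrite (E u w Su Gw) (E v w Sv Gw) nwu nwv.
Qed.

Lemma Qodd (R : rcfType) : odd n ->
  (2 * n - 1 <= mup (- ((2 * n).+1%:R * Num.sqrt 2) : R)%R
                     (char_poly (sombor_matrix R G (cspg_adj G))))%N.
Proof.
move=> on.
have A1 : 1 \in A := group1 _.
have AA : A \subset A := subxx _.
have tw := QTW (QSG (K := <[a]>%G) AA A1) (QSnA (K := <[a]>%G) AA A1)
  (QSnorm (K := <[a]>%G) QA2A AA A1) (QSan (K := <[a]>%G) (c := 1) QanA)
  (QSpos_odd on).
set S := A :* (1 * b) in tw.
have cS : #|S| = (2 * n)%N by rewrite card_rcoset -QoA.
have Sb : b \in S by rewrite mem_rcoset mul1g mulgV group1.
have cX : #|S :\ b| = (2 * n - 1)%N.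
  have := cardsD1 b S; rewrite Sb cS /= add1n; set k := #|S :\ b|; lia.
rewrite -cX; apply: (@twin_mup R _ G (cspg_adj G) (S :\ b) (fun _ => b) (2 * n).+1).
  by apply/subsetP => x; rewrite !inE => /andP [_ Sx]; apply: (QSG AA A1).
move=> u; rewrite !inE => /andP [nub Su].
have [h1 h2 h3 h4 h5] := tw u b Su Sb nub.
rewrite /=; split; [exact: Qb | by rewrite eqxx | by rewrite /cspg_adj eqxx
        | by rewrite /cspg_adj eqxx | ].
by split; rewrite ?h3 ?h4 ?cS // => w Gw nwu nwb; apply: h5.
Qed.

Lemma Qeven (R : rcfType) : ~~ odd n ->
  (2 * n - 2 <= mup (- ((n.+1)%:R * Num.sqrt 2) : R)%R
                     (char_poly (sombor_matrix R G (cspg_adj G))))%N.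
Proof.
move=> en.
have A1 : 1 \in A := group1 _.
have Aa : a \in A := cycle_id _.
have A2A := QA2A.
have A2an := QevA2 en.
have tw0 := QTW (QSG (K := <[a ^+ 2]>%G) A2A A1) (QSnA (K := <[a ^+ 2]>%G) A2A A1)
  (QSnorm (K := <[a ^+ 2]>%G) (subxx _) A2A A1) (QSan (K := <[a ^+ 2]>%G) (c := 1) A2an)
  (QSpos_even A1).
have tw1 := QTW (QSG (K := <[a ^+ 2]>%G) A2A Aa) (QSnA (K := <[a ^+ 2]>%G) A2A Aa)
  (QSnorm (K := <[a ^+ 2]>%G) (subxx _) A2A Aa) (QSan (K := <[a ^+ 2]>%G) (c := a) A2an)
  (QSpos_even Aa).
set S0 := A2 :* (1 * b) in tw0.
set S1 := A2 :* (a * b) in tw1.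
have cS0 : #|S0| = n by rewrite card_rcoset QcA2.
have cS1 : #|S1| = n by rewrite card_rcoset QcA2.
have Sb : b \in S0 by rewrite mem_rcoset mul1g mulgV group1.
have Sab : a * b \in S1 by rewrite mem_rcoset mulgV group1.
have disj x : x \in S0 -> x \notin S1.
  rewrite !mem_rcoset mul1g invMg => H0; apply/negP => H1.
  have := groupM (groupVr H0) H1.
  rewrite invMg invgK -mulgA mulKg mulKVg groupV.
  by rewrite (negbTE QanotA2).
have cX0 : #|S0 :\ b| = (n - 1)%N.
  have := cardsD1 b S0; rewrite Sb cS0 /= add1n; set k := #|S0 :\ b|; lia.
have cX1 : #|S1 :\ (a * b)| = (n - 1)%N.
  have := cardsD1 (a * b) S1; rewrite Sab cS1 /= add1n; set k := #|S1 :\ _|; lia.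
set X := (S0 :\ b) :|: (S1 :\ (a * b)).
have cX : #|X| = (2 * n - 2)%N.
  have := cardsUI (S0 :\ b) (S1 :\ (a * b)).
  have -> : (S0 :\ b) :&: (S1 :\ (a * b)) = set0.
    apply/setP => x; rewrite !inE; apply/negP => /andP [/andP [_ x0] /andP [_ x1]].
    by move: (disj x x0); rewrite x1.
  rewrite cards0 cX0 cX1 -/X; set k := #|X|; lia.
rewrite -cX.
apply: (@twin_mup R _ G (cspg_adj G) X (fun u => if u \in S0 then b else a * b) n.+1).
  apply/subsetP => x; rewrite !inE => /orP [/andP [_ Sx]|/andP [_ Sx]].
    exact: (QSG A2A A1).
  exact: (QSG A2A Aa).
move=> u; rewrite !inE => /orP [/andP [nub Su]|/andP [nuab Su]].
  have [h1 h2 h3 h4 h5] := tw0 u b Su Sb nub.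
  rewrite /= Su; split; [exact: Qb | | by rewrite /cspg_adj eqxx
        | by rewrite /cspg_adj eqxx | ].
    by rewrite eqxx /= (negbTE (disj b Sb)) andbF.
  by split; rewrite ?h3 ?h4 ?cS0 // => w Gw nwu nwb; apply: h5.
have [h1 h2 h3 h4 h5] := tw1 u (a * b) Su Sab nuab.
have nS0 : (u \in S0) = false by apply/negP => /disj; rewrite Su.
have nS0' : (a * b \in S0) = false by apply/negP => /disj; rewrite Sab.
rewrite /= nS0; split; [exact: groupM Qa Qb | | by rewrite /cspg_adj eqxx
      | by rewrite /cspg_adj eqxx | ].
  by rewrite nS0' eqxx andbF.
by split; rewrite ?h3 ?h4 ?cS1 // => w Gw nwu nwb; apply: h5.
Qed.

Lemma Qmain (R : rcfType) :
  (~~ odd n ->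
     (2 * n - 2 <= mup (- ((n.+1)%:R * Num.sqrt 2) : R)%R
                     (char_poly (sombor_matrix R G (cspg_adj G))))%N) /\
  (odd n ->
     (2 * n - 1 <= mup (- ((2 * n).+1%:R * Num.sqrt 2) : R)%R
                     (char_poly (sombor_matrix R G (cspg_adj G))))%N).
Proof. by split; [apply: Qeven | apply: Qodd]. Qed.

End Q.

Close Scope group_scope.

Theorem theorem6p10 (R : rcfType) (gT : finGroupType) (G : {group gT})
  (a b : gT) (n : nat) :
  (2 <= n)%N ->
  G :=: <<[set a; b]>>%g ->
  (a ^+ (2 * n) = 1)%g -> (a ^+ n = b ^+ 2)%g -> (b * a = a^-1 * b)%g ->
  #|G| = (4 * n)%N ->
  (~~ odd n ->
     (2 * n - 2 <= mup (- ((n.+1)%:R * Num.sqrt 2) : R)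
                     (char_poly (sombor_matrix R G (cspg_adj G))))%N) /\
  (odd n ->
     (2 * n - 1 <= mup (- ((2 * n).+1%:R * Num.sqrt 2) : R)
                     (char_poly (sombor_matrix R G (cspg_adj G))))%N).
Proof.
move=> n2 HG Ha2n Han Hba cG.
by eapply Qmain; eassumption.
Qed.
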